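(* Let $X$ be a set of cardinality at least $2^{\aleph_0}$, considered as a discrete topological space. Then for every formula $A$ of $\mathcal{L}_\nabla$: (i) if $X\vDash_{i\mathbf{ST}}A$ then $i\mathbf{STL}\vdash A$; (ii) if $X\vDash_{i\mathbf{ST}(F)}A$ then $i\mathbf{STL}(F)\vdash A$; (iii) if $X\vDash_{i\mathbf{ST}(wF)}A$ then $i\mathbf{STL}(wF)\vdash A$.
   Context: Formulas of $\mathcal{L}_\nabla$ are built from variables and constants $1,\top,\bot$ by $\wedge,\vee,\otimes,\to$ and unary $\nabla$. Sequents $\Gamma\Rightarrow A$ have $\Gamma$ a finite sequence; $\nabla\Gamma$ applies $\nabla$ to each member; ''$L\vdash A$'' means $L$ derives $\Rightarrow A$. $\mathbf{STL}$ has axioms $A\Rightarrow A$, $\Rightarrow1$, $\nabla1\Rightarrow1$, $\Gamma\Rightarrow\top$, $\Gamma,\bot,\Sigma\Rightarrow A$ and rules (premises / conclusion): cut: $\Gamma\Rightarrow A$, $\Pi,A,\Sigma\Rightarrow B$ / $\Pi,\Gamma,\Sigma\Rightarrow B$; $L\wedge$: $\Gamma,A,\Sigma\Rightarrow C$ / $\Gamma,A\wedge B,\Sigma\Rightarrow C$ and $\Gamma,B,\Sigma\Rightarrow C$ / $\Gamma,A\wedge B,\Sigma\Rightarrow C$; $R\wedge$: $\Gamma\Rightarrow A$, $\Gamma\Rightarrow B$ / $\Gamma\Rightarrow A\wedge B$; $L\vee$: $\Gamma,A,\Sigma\Rightarrow C$, $\Gamma,B,\Sigma\Rightarrow C$ /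 $\Gamma,A\vee B,\Sigma\Rightarrow C$; $R\vee$: $\Gamma\Rightarrow A$ / $\Gamma\Rightarrow A\vee B$ and $\Gamma\Rightarrow B$ / $\Gamma\Rightarrow A\vee B$; $L1$: $\Gamma,\Sigma\Rightarrow A$ / $\Gamma,1,\Sigma\Rightarrow A$; $L\otimes$: $\Gamma,A,B,\Sigma\Rightarrow C$ / $\Gamma,A\otimes B,\Sigma\Rightarrow C$; $R\otimes$: $\Gamma\Rightarrow A$, $\Sigma\Rightarrow B$ / $\Gamma,\Sigma\Rightarrow A\otimes B$; $(\nabla)$: $A\Rightarrow B$ / $\nabla A\Rightarrow\nabla B$; Oplax: $\nabla A,\nabla B\Rightarrow C$ / $\nabla(A\otimes B)\Rightarrow C$; $L\to$: $\Gamma\Rightarrow A$, $\Pi,B,\Sigma\Rightarrow C$ / $\Pi,\Gamma,\nabla(A\to B),\Sigma\Rightarrow C$; $R\to$: $A,\nabla\Gamma\Rightarrow B$ / $\Gamma\Rightarrow A\to B$. Scheme $(F)$: $\Gamma\Rightarrow A$ / $\Gamma\Rightarrow\nabla A$; scheme $(wF)$: $\nabla A\Rightarrow\bot$ / $A\Rightarrow\bot$. $i\mathbf{STL}$ is $\mathbf{STL}$ plus left weakening, contraction and exchange; $i\mathbf{STL}(F)$, $i\mathbf{STL}(wF)$ add the respective scheme. For a space $Z$ and a union-preserving $\nabla:\mathcal{O}(Z)\to\mathcal{O}(Z)$, the implication is $W_1\to W_2=\Box(W_1\Rightarrow W_2)$ with $\Box$ the right adjoint of $\nabla$ and $\Rightarrow$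 the Heyting implication (equivalently $W_1\cap\nabla W_2\subseteq W_3$ iff $W_2\subseteq W_1\to W_3$). A valuation of variables in $\mathcal{O}(Z)$ extends by $1,\top\mapsto Z$, $\bot\mapsto\emptyset$, $\wedge,\otimes\mapsto\cap$, $\vee\mapsto\cup$, $\nabla\mapsto\nabla$, $\to\mapsto\to$. $i\mathbf{ST}$ is the class of all such $(\mathcal{O}(Z),\nabla)$, $i\mathbf{ST}(F)$ those with $W\subseteq\nabla W$, $i\mathbf{ST}(wF)$ those with $\nabla W=\emptyset\Rightarrow W=\emptyset$. $Z\vDash_{\mathcal{C}}A$ means $V(A)=Z$ for every $\nabla$ with $(\mathcal{O}(Z),\nabla)\in\mathcal{C}$ and every valuation $V$. *)

(* Defs.v *)
From Stdlib Require Import List.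
Import ListNotations.

Inductive formula : Type :=
| Var : nat -> formula
| One : formula
| Top : formula
| Bot : formula
| And : formula -> formula -> formula
| Or : formula -> formula -> formula
| Tens : formula -> formula -> formula
| Imp : formula -> formula -> formula
| Nab : formula -> formula.

Inductive scheme : Type := NoScheme | SchF | SchwF.

Inductive derives (s : scheme) : list formula -> formula -> Prop :=
| ax_id A : derives s [A] A
| ax_one : derives s [] One
| ax_nabone : derives s [Nab One] One
| ax_top G : derives s G Top
| ax_bot G S A : derives s (G ++ Bot :: S) A
| r_cut G P S A B :
    derives s G A -> derives s (P ++ A :: S) B -> derives s (P ++ G ++ S) B
| r_andL1 G S A B C :
    derives s (G ++ A :: S) C -> derives s (G ++ And A B :: S) C
| r_andL2 G S A B C :
    derives s (G ++ B :: S) C -> derives s (G ++ And A B :: S) C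
| r_andR G A B : derives s G A -> derives s G B -> derives s G (And A B)
| r_orL G S A B C :
    derives s (G ++ A :: S) C -> derives s (G ++ B :: S) C ->
    derives s (G ++ Or A B :: S) C
| r_orR1 G A B : derives s G A -> derives s G (Or A B)
| r_orR2 G A B : derives s G B -> derives s G (Or A B)
| r_oneL G S A : derives s (G ++ S) A -> derives s (G ++ One :: S) A
| r_tensL G S A B C :
    derives s (G ++ A :: B :: S) C -> derives s (G ++ Tens A B :: S) C
| r_tensR G S A B : derives s G A -> derives s S B -> derives s (G ++ S) (Tens A B)
| r_nab A B : derives s [A] B -> derives s [Nab A] (Nab B)
| r_oplax A B C : derives s [Nab A; Nab B] C -> derives s [Nab (Tens A B)] C
| r_impL G P S A B C :
    derives s G A -> derives s (P ++ B :: S) C ->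
    derives s (P ++ G ++ Nab (Imp A B) :: S) C
| r_impR G A B : derives s (A :: map Nab G) B -> derives s G (Imp A B)
| r_weak G S A C : derives s (G ++ S) C -> derives s (G ++ A :: S) C
| r_contr G S A C : derives s (G ++ A :: A :: S) C -> derives s (G ++ A :: S) C
| r_exch G S A B C : derives s (G ++ A :: B :: S) C -> derives s (G ++ B :: A :: S) C
| r_F G A : s = SchF -> derives s G A -> derives s G (Nab A)
| r_wF A : s = SchwF -> derives s [Nab A] Bot -> derives s [A] Bot.

Definition provable (s : scheme) (A : formula) : Prop := derives s [] A.

(** Semantics on the discrete space X: every subset is open, O(X) = X -> Prop. *)
Definition subset {X : Type} (U W : X -> Prop) : Prop := forall x, U x -> W x.

Definition union_preserving {X : Type} (nab : (X -> Prop) -> (X -> Prop)) : Prop :=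
  forall (I : Type) (F : I -> X -> Prop),
    nab (fun x => exists i, F i x) = (fun x => exists i, nab (F i) x).

(** Right adjoint of nabla: Box W = union of all (open) U with nab U <= W. *)
Definition box {X : Type} (nab : (X -> Prop) -> (X -> Prop)) (W : X -> Prop) : X -> Prop :=
  fun x => exists U : X -> Prop, subset (nab U) W /\ U x.

(** Heyting implication in the discrete topology (interior is the identity). *)
Definition heyting_imp {X : Type} (W1 W2 : X -> Prop) : X -> Prop :=
  fun x => W1 x -> W2 x.

Definition st_imp {X : Type} (nab : (X -> Prop) -> (X -> Prop)) (W1 W2 : X -> Prop)
  : X -> Prop := box nab (heyting_imp W1 W2).

Fixpoint interp {X : Type} (nab : (X -> Prop) -> (X -> Prop)) (V : nat -> X -> Prop)
  (A : formula) : X -> Prop :=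
  match A with
  | Var n => V n
  | One => fun _ => True
  | Top => fun _ => True
  | Bot => fun _ => False
  | And A B => fun x => interp nab V A x /\ interp nab V B x
  | Tens A B => fun x => interp nab V A x /\ interp nab V B x
  | Or A B => fun x => interp nab V A x \/ interp nab V B x
  | Nab A => nab (interp nab V A)
  | Imp A B => st_imp nab (interp nab V A) (interp nab V B)
  end.

Definition in_class {X : Type} (s : scheme) (nab : (X -> Prop) -> (X -> Prop)) : Prop :=
  union_preserving nab /\
  match s with
  | NoScheme => True
  | SchF => forall W : X -> Prop, subset W (nab W)
  | SchwF => forall W : X -> Prop, (forall x, ~ nab W x) -> (forall x, ~ W x)
  end.

Definition valid_on (X : Type) (s : scheme) (A : formula) : Prop :=
  forall (nab : (X -> Prop) -> (X -> Prop)) (V : nat -> X -> Prop),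
    in_class s nab -> forall x : X, interp nab V A x.

Definition card_ge_continuum (X : Type) : Prop :=
  exists f : (nat -> bool) -> X, forall a b, f a = f b -> a = b.

(* Main.v *)
Require Import Defs.
From Stdlib Require Import List Arith Lia Classical ClassicalEpsilon FunctionalExtensionality PropExtensionality.
From Stdlib Require Cantor.
Import ListNotations.

Fixpoint dec (fuel n : nat) : formula :=
  match fuel with
  | 0 => Top
  | S f =>
    let (t, m) := Cantor.of_nat n in
    let (a, b) := Cantor.of_nat m in
    match t with
    | 0 => Var m | 1 => One | 2 => Top | 3 => Bot
    | 4 => And (dec f a) (dec f b)
    | 5 => Or (dec f a) (dec f b)
    | 6 => Tens (dec f a) (dec f b)
    | 7 => Imp (dec f a) (dec f b)
    | _ => Nab (dec f m)
    end
  end.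

Lemma dec_surj A : exists k N, forall fuel, N <= fuel -> dec fuel k = A.
Proof.
  induction A.
  - exists (Cantor.to_nat (0, n)), 1. intros [|f] H; [lia|]. cbn [dec].
    rewrite Cantor.cancel_of_to. destruct (Cantor.of_nat n). reflexivity.
  - exists (Cantor.to_nat (1, 0)), 1. intros [|f] H; [lia|]. cbn [dec].
    rewrite Cantor.cancel_of_to. reflexivity.
  - exists (Cantor.to_nat (2, 0)), 1. intros [|f] H; [lia|]. cbn [dec].
    rewrite Cantor.cancel_of_to. reflexivity.
  - exists (Cantor.to_nat (3, 0)), 1. intros [|f] H; [lia|]. cbn [dec].
    rewrite Cantor.cancel_of_to. reflexivity.
  - destruct IHA1 as [k1 [N1 H1]], IHA2 as [k2 [N2 H2]].
    exists (Cantor.to_nat (4, Cantor.to_nat (k1, k2))), (S (max N1 N2)).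
    intros [|f] H; [lia|]. cbn [dec]. rewrite !Cantor.cancel_of_to.
    rewrite H1, H2 by lia. reflexivity.
  - destruct IHA1 as [k1 [N1 H1]], IHA2 as [k2 [N2 H2]].
    exists (Cantor.to_nat (5, Cantor.to_nat (k1, k2))), (S (max N1 N2)).
    intros [|f] H; [lia|]. cbn [dec]. rewrite !Cantor.cancel_of_to.
    rewrite H1, H2 by lia. reflexivity.
  - destruct IHA1 as [k1 [N1 H1]], IHA2 as [k2 [N2 H2]].
    exists (Cantor.to_nat (6, Cantor.to_nat (k1, k2))), (S (max N1 N2)).
    intros [|f] H; [lia|]. cbn [dec]. rewrite !Cantor.cancel_of_to.
    rewrite H1, H2 by lia. reflexivity.
  - destruct IHA1 as [k1 [N1 H1]], IHA2 as [k2 [N2 H2]].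
    exists (Cantor.to_nat (7, Cantor.to_nat (k1, k2))), (S (max N1 N2)).
    intros [|f] H; [lia|]. cbn [dec]. rewrite !Cantor.cancel_of_to.
    rewrite H1, H2 by lia. reflexivity.
  - destruct IHA as [k1 [N1 H1]].
    exists (Cantor.to_nat (8, k1)), (S N1).
    intros [|f] H; [lia|]. cbn [dec]. rewrite !Cantor.cancel_of_to.
    destruct (Cantor.of_nat k1). rewrite H1 by lia. reflexivity.
Qed.

Definition enum (n : nat) : formula := let (f, k) := Cantor.of_nat n in dec f k.

Lemma enum_surj A : exists n, enum n = A.
Proof.
  destruct (dec_surj A) as [k [N H]]. exists (Cantor.to_nat (N, k)).
  unfold enum. rewrite Cantor.cancel_of_to. apply H. lia.
Qed.

Section D.
Variable s : scheme.
Notation "A |- B" := (derives s [A] B) (at level 70).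

Lemma cut1 A B C : A |- B -> B |- C -> A |- C.
Proof. intros H1 H2. apply (r_cut s [A] [] [] B C); assumption. Qed.

Lemma andL1 A B C : A |- C -> And A B |- C.
Proof. intros H. apply (r_andL1 s [] [] A B C); exact H. Qed.
Lemma andL2 A B C : B |- C -> And A B |- C.
Proof. intros H. apply (r_andL2 s [] [] A B C); exact H. Qed.
Lemma orL A B C : A |- C -> B |- C -> Or A B |- C.
Proof. intros H1 H2. apply (r_orL s [] [] A B C); assumption. Qed.
Lemma botL A : Bot |- A.
Proof. apply (ax_bot s [] [] A). Qed.

Lemma pair_and A B C : derives s [A; B] C -> And A B |- C.
Proof.
  intros H. apply (r_contr s [] [] (And A B) C).
  apply (r_andL1 s [] [And A B] A B C).
  apply (r_andL2 s [A] [] A B C). exact H.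
Qed.

Lemma and_pair A B C : And A B |- C -> derives s [A; B] C.
Proof.
  intros H. apply (r_cut s [A; B] [] [] (And A B) C); [|exact H].
  apply r_andR.
  - apply (r_weak s [A] [] B A). apply ax_id.
  - apply (r_weak s [] [B] A B). apply ax_id.
Qed.

Lemma distr A B C : And A (Or B C) |- Or (And A B) (And A C).
Proof.
  apply pair_and. apply (r_orL s [A] [] B C).
  - apply r_orR1. apply and_pair. apply ax_id.
  - apply r_orR2. apply and_pair. apply ax_id.
Qed.

Lemma nab_or A B : Nab (Or A B) |- Or (Nab A) (Nab B).
Proof.
  set (C := Or (Nab A) (Nab B)).
  apply cut1 with (Nab (Imp Top C)).
  - apply r_nab. apply orL.
    + apply (r_impR s [A]). simpl. apply (r_weak s [] [Nab A] Top). simpl.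
      apply r_orR1. apply ax_id.
    + apply (r_impR s [B]). simpl. apply (r_weak s [] [Nab B] Top). simpl.
      apply r_orR2. apply ax_id.
  - apply (r_impL s [] [] [] Top C C). apply ax_top. apply ax_id.
Qed.

Lemma nab_bot : Nab Bot |- Bot.
Proof.
  apply cut1 with (Nab (Imp Top Bot)).
  - apply r_nab. apply botL.
  - apply (r_impL s [] [] [] Top Bot Bot). apply ax_top. apply ax_id.
Qed.

Lemma imp_elim A B : And (Nab (Imp A B)) A |- B.
Proof.
  apply pair_and. apply (r_exch s [] [] A (Nab (Imp A B)) B).
  apply (r_impL s [A] [] [] A B B); apply ax_id.
Qed.

Lemma imp_intro A B D : And A (Nab D) |- B -> D |- Imp A B.
Proof. intros H. apply (r_impR s [D]). simpl. apply and_pair. exact H. Qed.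

Lemma thm_top A : derives s [] A -> Top |- A.
Proof. intros H. apply (r_weak s [] [] Top A). exact H. Qed.

Lemma top_thm A : Top |- A -> derives s [] A.
Proof. intros H. apply (r_cut s [] [] [] Top A). apply ax_top. exact H. Qed.

End D.

Inductive cl_and (D : formula -> Prop) : formula -> Prop :=
| ca_top : cl_and D Top
| ca_in C : D C -> cl_and D C
| ca_and C1 C2 : cl_and D C1 -> cl_and D C2 -> cl_and D (And C1 C2).
Inductive cl_or (T : formula -> Prop) : formula -> Prop :=
| co_bot : cl_or T Bot
| co_in C : T C -> cl_or T C
| co_or C1 C2 : cl_or T C1 -> cl_or T C2 -> cl_or T (Or C1 C2).

Lemma cl_and_mono (D D' : formula -> Prop) x : (forall y, D y -> D' y) -> cl_and D x -> cl_and D' x.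
Proof. intros H. induction 1; [constructor 1|constructor 2; auto|constructor 3; auto]. Qed.
Lemma cl_or_mono (D D' : formula -> Prop) x : (forall y, D y -> D' y) -> cl_or D x -> cl_or D' x.
Proof. intros H. induction 1; [constructor 1|constructor 2; auto|constructor 3; auto]. Qed.

Definition consistent s (D T : formula -> Prop) : Prop :=
  ~ exists C E, cl_and D C /\ cl_or T E /\ derives s [C] E.

Definition prime_th s (T : formula -> Prop) : Prop :=
  (forall C D, T C -> derives s [C] D -> T D) /\
  (forall C D, T C -> T D -> T (And C D)) /\
  T Top /\ ~ T Bot /\
  (forall C D, T (Or C D) -> T C \/ T D).

Definition addf (D : formula -> Prop) C := fun x => D x \/ x = C.

Lemma cl_and_add s D C x : cl_and (addf D C) x ->
  exists y, cl_and D y /\ derives s [And y C] x.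
Proof.
  induction 1.
  - exists Top. split. constructor. apply ax_top.
  - destruct H as [H|H].
    + exists C0. split. now constructor. apply andL1, ax_id.
    + subst. exists Top. split. constructor. apply andL2, ax_id.
  - destruct IHcl_and1 as [y1 [H1 K1]], IHcl_and2 as [y2 [H2 K2]].
    exists (And y1 y2). split. now apply ca_and.
    apply r_andR.
    + apply cut1 with (And y1 C); [|exact K1]. apply r_andR.
      apply andL1, andL1, ax_id. apply andL2, ax_id.
    + apply cut1 with (And y2 C); [|exact K2]. apply r_andR.
      apply andL1, andL2, ax_id. apply andL2, ax_id.
Qed.

Lemma cl_or_add s T C x : cl_or (addf T C) x ->
  exists y, cl_or T y /\ derives s [x] (Or y C).
Proof.
  induction 1.
  - exists Bot. split. constructor. apply botL.
  - destruct H as [H|H].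
    + exists C0. split. now constructor. apply r_orR1, ax_id.
    + subst. exists Bot. split. constructor. apply r_orR2, ax_id.
  - destruct IHcl_or1 as [y1 [H1 K1]], IHcl_or2 as [y2 [H2 K2]].
    exists (Or y1 y2). split. now apply co_or.
    apply orL.
    + apply cut1 with (Or y1 C); [exact K1|]. apply orL.
      apply r_orR1, r_orR1, ax_id. apply r_orR2, ax_id.
    + apply cut1 with (Or y2 C); [exact K2|]. apply orL.
      apply r_orR1, r_orR2, ax_id. apply r_orR2, ax_id.
Qed.

Lemma split_cons s D T C : consistent s D T ->
  consistent s (addf D C) T \/ consistent s D (addf T C).
Proof.
  intros H. apply NNPP. intros K. apply not_or_and in K. destruct K as [K1 K2].
  apply NNPP in K1. apply NNPP in K2.
  destruct K1 as [x1 [e1 [A1 [B1 C1]]]]. destruct K2 as [x2 [e2 [A2 [B2 C2]]]].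
  apply (cl_and_add s) in A1. destruct A1 as [d1 [A1 D1]].
  apply (cl_or_add s) in B2. destruct B2 as [f2 [B2 F2]].
  apply H. exists (And d1 x2), (Or e1 f2). split. now apply ca_and. split. now apply co_or.
  apply cut1 with (And d1 (Or f2 C)).
  - apply r_andR. apply andL1, ax_id. apply andL2. eapply cut1. exact C2. exact F2.
  - eapply cut1. apply distr. apply orL.
    + apply andL2. apply r_orR2, ax_id.
    + apply r_orR1. eapply cut1. exact D1. exact C1.
Qed.

Fixpoint stage s (D T : formula -> Prop) (n : nat) : (formula -> Prop) * (formula -> Prop) :=
  match n with
  | 0 => (D, T)
  | S m => let (D', T') := stage s D T m in
      if excluded_middle_informative (consistent s (addf D' (enum m)) T')
      then (addf D' (enum m), T') else (D', addf T' (enum m))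
  end.

Lemma stage_cons s D T n : consistent s D T ->
  consistent s (fst (stage s D T n)) (snd (stage s D T n)).
Proof.
  intros H. induction n; simpl; [exact H|].
  destruct (stage s D T n) as [D' T']. simpl in IHn.
  destruct excluded_middle_informative as [e|e]; [exact e|].
  destruct (split_cons s D' T' (enum n) IHn); [contradiction|assumption].
Qed.

Lemma stage_mono s D T n m : n <= m ->
  (forall x, fst (stage s D T n) x -> fst (stage s D T m) x) /\
  (forall x, snd (stage s D T n) x -> snd (stage s D T m) x).
Proof.
  induction 1; [split; auto|].
  destruct IHle as [I1 I2]. simpl.
  destruct (stage s D T m) as [D' T']. simpl in *.
  destruct excluded_middle_informative; simpl; split; intros; unfold addf; auto.
Qed.

Lemma stage_total s D T n :
  fst (stage s D T (S n)) (enum n) \/ snd (stage s D T (S n)) (enum n).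
Proof.
  simpl. destruct (stage s D T n) as [D' T'].
  destruct excluded_middle_informative; simpl; unfold addf; auto.
Qed.

Lemma lindenbaum s D T : consistent s D T ->
  exists P, prime_th s P /\ (forall C, D C -> P C) /\ (forall C, T C -> ~ P C).
Proof.
  intros H.
  set (Pi := fun x => exists n, fst (stage s D T n) x).
  set (Ti := fun x => exists n, snd (stage s D T n) x).
  assert (HA : forall x, cl_and Pi x -> exists n, cl_and (fst (stage s D T n)) x).
  { induction 1.
    - exists 0. constructor.
    - destruct H0 as [n Hn]. exists n. now constructor.
    - destruct IHcl_and1 as [n1 H1], IHcl_and2 as [n2 H2]. exists (max n1 n2).
      apply ca_and.
      + revert H1; apply cl_and_mono; apply (stage_mono s D T n1 (max n1 n2)); lia.
      + revert H2; apply cl_and_mono; apply (stage_mono s D T n2 (max n1 n2)); lia. }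
  assert (HO : forall x, cl_or Ti x -> exists n, cl_or (snd (stage s D T n)) x).
  { induction 1.
    - exists 0. constructor.
    - destruct H0 as [n Hn]. exists n. now constructor.
    - destruct IHcl_or1 as [n1 H1], IHcl_or2 as [n2 H2]. exists (max n1 n2).
      apply co_or.
      + revert H1; apply cl_or_mono; apply (stage_mono s D T n1 (max n1 n2)); lia.
      + revert H2; apply cl_or_mono; apply (stage_mono s D T n2 (max n1 n2)); lia. }
  assert (HC : consistent s Pi Ti).
  { intros [x [e [A1 [B1 C1]]]]. apply HA in A1. apply HO in B1.
    destruct A1 as [n1 A1], B1 as [n2 B1].
    apply (stage_cons s D T (max n1 n2) H). exists x, e. split; [|split; [|exact C1]].
    - revert A1; apply cl_and_mono; apply (stage_mono s D T n1 (max n1 n2)); lia.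
    - revert B1; apply cl_or_mono; apply (stage_mono s D T n2 (max n1 n2)); lia. }
  assert (HT : forall x, Pi x \/ Ti x).
  { intros x. destruct (enum_surj x) as [n <-].
    destruct (stage_total s D T n); [left|right]; exists (S n); auto. }
  exists Pi. split; [|split].
  - split; [|split; [|split; [|split]]].
    + intros C E HCi HD. destruct (HT E) as [|HE]; auto. exfalso. apply HC.
      exists C, E. split; [apply ca_in; auto|split; [apply co_in; auto|exact HD]].
    + intros C E H1 H2. destruct (HT (And C E)) as [|HE]; auto. exfalso. apply HC.
      exists (And C E), (And C E). split; [apply ca_and; apply ca_in; auto|split; [apply co_in; auto|apply ax_id]].
    + destruct (HT Top) as [|HE]; auto. exfalso. apply HC.
      exists Top, Top. split; [apply ca_top|split; [apply co_in; auto|apply ax_id]].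
    + intros HB. apply HC. exists Bot, Bot. split; [apply ca_in; auto|split; [apply co_bot|apply ax_id]].
    + intros C E HO'. destruct (HT C) as [|H1]; auto. destruct (HT E) as [|H2]; auto.
      exfalso. apply HC. exists (Or C E), (Or C E).
      split; [apply ca_in; auto|split; [apply co_or; apply co_in; auto|apply ax_id]].
  - intros C HD. exists 0. exact HD.
  - intros C HT' HP. apply HC. exists C, C. split; [apply ca_in; auto|split; [apply co_in; exists 0; exact HT'|apply ax_id]].
Qed.

Lemma pt_cl s T C D : prime_th s T -> T C -> derives s [C] D -> T D.
Proof. intros [H _]. apply H. Qed.
Lemma pt_and s T C D : prime_th s T -> T C -> T D -> T (And C D).
Proof. intros [_ [H _]]. apply H. Qed.
Lemma pt_top s T : prime_th s T -> T Top.
Proof. intros [_ [_ [H _]]]. apply H. Qed.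
Lemma pt_bot s T : prime_th s T -> ~ T Bot.
Proof. intros [_ [_ [_ [H _]]]]. apply H. Qed.
Lemma pt_or s T C D : prime_th s T -> T (Or C D) -> T C \/ T D.
Proof. intros [_ [_ [_ [_ H]]]]. apply H. Qed.
Lemma pt_thm s T C : prime_th s T -> derives s [] C -> T C.
Proof. intros H K. apply (pt_cl s T Top C H (pt_top s T H)). apply thm_top, K. Qed.

Lemma exist_nab s Q A : prime_th s Q -> Q (Nab A) ->
  exists P, prime_th s P /\ P A /\ forall C, P C -> Q (Nab C).
Proof.
  intros HQ HA.
  destruct (lindenbaum s (fun x => x = A) (fun C => ~ Q (Nab C))) as [P [H1 [H2 H3]]].
  - intros [D [E [K1 [K2 K3]]]].
    assert (L1 : derives s [A] D).
    { clear K2 K3. induction K1. apply ax_top. subst. apply ax_id. apply r_andR; auto. }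
    assert (L2 : ~ Q (Nab E)).
    { clear K1 K3. induction K2.
      - intro. eapply pt_bot; [exact HQ|]. eapply pt_cl; [exact HQ|exact H|apply nab_bot].
      - exact H.
      - intro. destruct (pt_or s Q _ _ HQ (pt_cl s Q _ _ HQ H (nab_or s C1 C2))); auto. }
    apply L2. eapply pt_cl; [exact HQ|exact HA|]. apply r_nab. eapply cut1; eauto.
  - exists P. split; [exact H1|split; [apply H2; reflexivity|]].
    intros C HC. apply NNPP. intros K. exact (H3 C K HC).
Qed.

Lemma exist_imp s P A B : prime_th s P -> ~ P (Imp A B) ->
  exists Q, prime_th s Q /\ (forall C, P C -> Q (Nab C)) /\ Q A /\ ~ Q B.
Proof.
  intros HP HAB.
  destruct (lindenbaum s (fun x => x = A \/ exists C, P C /\ x = Nab C) (fun x => x = B))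
    as [Q [H1 [H2 H3]]].
  - intros [D [E [K1 [K2 K3]]]].
    assert (L1 : exists G, P G /\ derives s [And A (Nab G)] D).
    { clear K2 K3. induction K1.
      - exists Top. split. apply (pt_top s), HP. apply ax_top.
      - destruct H as [->|[C' [HC ->]]].
        + exists Top. split. apply (pt_top s), HP. apply andL1, ax_id.
        + exists C'. split. exact HC. apply andL2, ax_id.
      - destruct IHK1_1 as [G1 [P1 D1]], IHK1_2 as [G2 [P2 D2]].
        exists (And G1 G2). split. apply (pt_and s); auto. apply r_andR.
        + eapply cut1; [|exact D1]. apply r_andR. apply andL1, ax_id.
          apply andL2. apply r_nab. apply andL1, ax_id.
        + eapply cut1; [|exact D2]. apply r_andR. apply andL1, ax_id.
          apply andL2. apply r_nab. apply andL2, ax_id. }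
    assert (L2 : derives s [E] B).
    { clear K1 K3. induction K2. apply botL. subst; apply ax_id. apply orL; auto. }
    destruct L1 as [G [PG DG]]. apply HAB. eapply pt_cl; [exact HP|exact PG|].
    apply imp_intro. eapply cut1; [exact DG|]. eapply cut1; eauto.
  - exists Q. split; [exact H1|split; [|split]].
    + intros C HC. apply H2. right. eauto.
    + apply H2. left. reflexivity.
    + apply H3. reflexivity.
Qed.

Lemma imp_top_bot s : s = SchwF -> derives s [Imp Top Bot] Bot.
Proof.
  intros e. apply r_wF; [exact e|].
  apply (r_impL s [] [] [] Top Bot Bot). apply ax_top. apply ax_id.
Qed.

Lemma exist_serial s P : s = SchwF -> prime_th s P ->
  exists Q, prime_th s Q /\ (forall C, P C -> Q (Nab C)).
Proof.
  intros e HP. destruct (exist_imp s P Top Bot HP) as [Q [H1 [H2 _]]].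
  - intros K. apply (pt_bot s P HP). eapply pt_cl; [exact HP|exact K|]. apply imp_top_bot, e.
  - eauto.
Qed.

Lemma exist_F s P : s = SchF -> prime_th s P -> forall C, P C -> P (Nab C).
Proof. intros e HP C HC. eapply pt_cl; [exact HP|exact HC|]. apply r_F; [exact e|apply ax_id]. Qed.

Lemma exist_main s A : ~ derives s [] A -> exists P, prime_th s P /\ ~ P A.
Proof.
  intros HA.
  destruct (lindenbaum s (fun _ => False) (fun x => x = A)) as [P [H1 [_ H3]]].
  - intros [D [E [K1 [K2 K3]]]].
    assert (L1 : derives s [Top] D).
    { clear K2 K3. induction K1. apply ax_id. contradiction. apply r_andR; auto. }
    assert (L2 : derives s [E] A).
    { clear K1 K3. induction K2. apply botL. subst; apply ax_id. apply orL; auto. }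
    apply HA. apply top_thm. eapply cut1; [exact L1|]. eapply cut1; eauto.
  - exists P. split; auto.
Qed.

Definition code (T : formula -> Prop) : nat -> bool :=
  fun n => if excluded_middle_informative (T (enum n)) then true else false.

Definition th {X : Type} (f : (nat -> bool) -> X) (x : X) : formula -> Prop :=
  fun A => exists a n, f a = x /\ enum n = A /\ a n = true.

Lemma th_code {X : Type} (f : (nat -> bool) -> X) (finj : forall a b, f a = f b -> a = b)
  T : th f (f (code T)) = T.
Proof.
  apply functional_extensionality. intros A. apply propositional_extensionality.
  unfold th, code. split.
  - intros [a [n [e1 [e2 e3]]]]. apply finj in e1. subst.
    destruct excluded_middle_informative; congruence.
  - intros H. destruct (enum_surj A) as [n <-]. exists (code T), n. unfold code.
    destruct excluded_middle_informative; tauto.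
Qed.

Definition canon s {X} (f : (nat -> bool) -> X) x := prime_th s (th f x).

Definition Rel s {X} (f : (nat -> bool) -> X) (x y : X) : Prop :=
  (canon s f x /\ canon s f y /\ forall C, th f x C -> th f y (Nab C)) \/
  (~ canon s f x /\ x = y).

Definition mnab s {X} (f : (nat -> bool) -> X) (W : X -> Prop) : X -> Prop :=
  fun y => exists x, W x /\ Rel s f x y.

Definition mval {X} (f : (nat -> bool) -> X) (n : nat) : X -> Prop := fun x => th f x (Var n).

Lemma truth s {X} (f : (nat -> bool) -> X) (finj : forall a b, f a = f b -> a = b) A :
  forall x, canon s f x -> (interp (mnab s f) (mval f) A x <-> th f x A).
Proof.
  induction A; intros x Hx; simpl.
  - reflexivity.
  - split; auto. intros _. apply (pt_thm s), ax_one. exact Hx.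
  - split; auto. intros _. apply (pt_top s), Hx.
  - split; [tauto|]. intros H. exfalso. exact (pt_bot s _ Hx H).
  - rewrite IHA1, IHA2 by exact Hx. split.
    + intros [H1 H2]. apply (pt_and s); auto.
    + intros H. split; eapply (pt_cl s); eauto. apply andL1, ax_id. apply andL2, ax_id.
  - rewrite IHA1, IHA2 by exact Hx. split.
    + intros [H|H]; eapply (pt_cl s); eauto. apply r_orR1, ax_id. apply r_orR2, ax_id.
    + intros H. apply (pt_or s); auto.
  - rewrite IHA1, IHA2 by exact Hx. split.
    + intros [H1 H2]. apply (pt_cl s _ (And A1 A2)); [exact Hx|apply (pt_and s); [exact Hx|exact H1|exact H2]|].
      apply pair_and. apply r_tensR with (G := [A1]) (S := [A2]); apply ax_id.
    + intros H. split; eapply (pt_cl s); eauto.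
      apply (r_tensL s [] []). apply (r_weak s [A1] []). apply ax_id.
      apply (r_tensL s [] []). apply (r_weak s [] [A2]). apply ax_id.
  - unfold st_imp, box, heyting_imp, subset. split.
    + intros [U [HU Ux]]. apply NNPP. intros K.
      destruct (exist_imp s _ A1 A2 Hx K) as [Q [Q1 [Q2 [Q3 Q4]]]].
      set (y := f (code Q)).
      assert (Ey : th f y = Q) by apply th_code, finj.
      assert (Cy : canon s f y) by (unfold canon; rewrite Ey; exact Q1).
      assert (Rxy : Rel s f x y).
      { left. split; [exact Hx|split; [exact Cy|]]. rewrite Ey. exact Q2. }
      specialize (HU y (ex_intro _ x (conj Ux Rxy))).
      apply Q4. rewrite <- Ey. apply IHA2; [exact Cy|]. apply HU.
      apply IHA1; [exact Cy|]. rewrite Ey. exact Q3.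
    + intros H. exists (fun z => z = x). split; [|reflexivity].
      intros y [z [-> Rxy]] HA1.
      destruct Rxy as [[_ [Cy Hi]]|[K _]]; [|contradiction].
      apply IHA2; [exact Cy|]. apply IHA1 in HA1; [|exact Cy].
      apply (pt_cl s _ (And (Nab (Imp A1 A2)) A1)); [exact Cy|apply (pt_and s); [exact Cy|apply Hi, H|exact HA1]|].
      apply imp_elim.
  - unfold mnab at 1. split.
    + intros [z [Hz Rzx]]. destruct Rzx as [[Cz [_ Hi]]|[K ->]]; [|contradiction].
      apply Hi. apply IHA; assumption.
    + intros H. destruct (exist_nab s _ A Hx H) as [P [P1 [P2 P3]]].
      set (z := f (code P)).
      assert (Ez : th f z = P) by apply th_code, finj.
      assert (Cz : canon s f z) by (unfold canon; rewrite Ez; exact P1).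
      exists z. split.
      * apply IHA; [exact Cz|]. rewrite Ez. exact P2.
      * left. split; [exact Cz|split; [exact Hx|]]. rewrite Ez. exact P3.
Qed.

Lemma mnab_class s {X} (f : (nat -> bool) -> X) (finj : forall a b, f a = f b -> a = b) :
  in_class s (mnab s f).
Proof.
  split.
  - intros I F. apply functional_extensionality. intros y. apply propositional_extensionality.
    unfold mnab. split.
    + intros [x [[i Hi] R]]. eauto.
    + intros [i [x [Hi R]]]. eauto.
  - destruct s eqn:Es.
    + exact I.
    + intros W x Wx. exists x. split; [exact Wx|].
      destruct (classic (canon SchF f x)) as [C|C]; [left|right; auto].
      split; [exact C|split; [exact C|]]. apply (exist_F SchF); auto.
    + intros W Hn x Wx.
      destruct (classic (canon SchwF f x)) as [C|C].
      * destruct (exist_serial SchwF _ eq_refl C) as [Q [Q1 Q2]].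
        set (y := f (code Q)).
        assert (Ey : th f y = Q) by apply th_code, finj.
        apply (Hn y). exists x. split; [exact Wx|]. left.
        split; [exact C|split; [unfold canon; rewrite Ey; exact Q1|]]. rewrite Ey. exact Q2.
      * apply (Hn x). exists x. split; [exact Wx|]. right; auto.
Qed.

Lemma complete s (X : Type) (hX : card_ge_continuum X) A :
  valid_on X s A -> provable s A.
Proof.
  destruct hX as [f finj]. intros HV. apply NNPP. intros K.
  destruct (exist_main s A K) as [P [P1 P2]].
  set (x := f (code P)).
  assert (Ex : th f x = P) by apply th_code, finj.
  assert (Cx : canon s f x) by (unfold canon; rewrite Ex; exact P1).
  apply P2. rewrite <- Ex. apply (truth s f finj A x Cx).
  apply HV. apply mnab_class, finj.
Qed.

Theorem theorem8p11 (X : Type) (hX : card_ge_continuum X) (A : formula) :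
  (valid_on X NoScheme A -> provable NoScheme A) /\
  (valid_on X SchF A -> provable SchF A) /\
  (valid_on X SchwF A -> provable SchwF A).
Proof.
  split; [|split]; apply complete; exact hX.
Qed.
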